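(* Let $\{D'_i\}_{i\in\mathbb{Z}}$ be a stationary sequence of non-negative integer-valued random variables with $D'_i\sim G$, and connect the stubs according to the Coin Toss (CT) rule with degrees $D'_i$. If $G$ has bounded support, then the total length $T$ of all edges at the origin satisfies $\mathbb{E}[T]<\infty$.
   Context: Stationary means the law of $\{D'_i\}$ is invariant under index shifts. CT rule: attach $D'_i$ stubs $s_{i,1},\dots,s_{i,D'_i}$ to vertex $i$. For $j\ge1$ let $\Gamma_j=\{i\in\mathbb{Z}:D'_i\ge j\}$; the stubs $s_{i,j}$, $i\in\Gamma_j$, form level $j$. For each level $j$ separately (with independent fair coin tosses, independent of the degrees) the level-$j$ stubs are given directions alternating right, left, right, left, \dots along $\Gamma_j$ in increasing order, the direction of the stub at the first vertex $i\ge0$ of $\Gamma_j$ being determined by a fair coin. A level-$j$ stub at $i$ pointing right (left) is joined to the level-$j$ stub at the $(2j-1)$-th vertex of $\Gamma_j$ to the right (left) of $i$, producing an edge. The length of an edge $\{i,k\}$ is $|i-k|$; $T$ is the total length of all edges at vertex $0$. *)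

(* Defs.v *)
From HB Require Import structures.
From mathcomp Require Import all_boot all_order all_algebra.
From mathcomp Require Import all_classical all_reals all_analysis.
Set Implicit Arguments. Unset Strict Implicit. Unset Printing Implicit Defensive.
Import Order.TTheory GRing.Theory Num.Theory.
Local Open Scope classical_set_scope.
Local Open Scope ring_scope.

(* Deterministic part of the Coin Toss (CT) rule.
   d : int -> nat   are the degrees D'_i,
   c : nat -> bool  are the level coins (c j = true means "right" for the
                    stub at the first vertex i >= 0 of Gamma_j). *)
Section CT.
Variables (d : int -> nat) (c : nat -> bool).

Definition cnt_right (j : nat) (i : int) (n : nat) : nat :=
  (\sum_(1 <= t < n.+1) (j <= d (i + t%:Z)%R))%N.
Definition cnt_left (j : nat) (i : int) (n : nat) : nat :=
  (\sum_(1 <= t < n.+1) (j <= d (i - t%:Z)%R))%N.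

(* i0 is the first vertex i >= 0 of Gamma_j = {i | d i >= j} *)
Definition first_nonneg (j : nat) (i0 : int) : Prop :=
  [/\ 0 <= i0, (j <= d i0)%N & forall m : int, 0 <= m -> m < i0 -> (d m < j)%N].

Definition rank_diff (j : nat) (i0 i : int) : nat :=
  if i0 <= i then cnt_right j i0 `|i - i0|%N else cnt_left j i0 `|i0 - i|%N.

(* directions alternate along Gamma_j, the one at i0 being given by c j *)
Definition points_right (j : nat) (i : int) : Prop :=
  exists i0, first_nonneg j i0 /\ (c j (+) odd (rank_diff j i0 i)) = true.
Definition points_left (j : nat) (i : int) : Prop :=
  exists i0, first_nonneg j i0 /\ (c j (+) odd (rank_diff j i0 i)) = false.

Definition joins (j : nat) (i k : int) : Prop :=
  [/\ (1 <= j)%N, (j <= d i)%N, (j <= d k)%N &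
    (points_right j i /\ exists n : nat, k = i + n%:Z /\ cnt_right j i n = (2 * j - 1)%N)
 \/ (points_left j i /\ exists n : nat, k = i - n%:Z /\ cnt_left j i n = (2 * j - 1)%N)].

(* edges: (level, smaller endpoint, larger endpoint) *)
Definition edges : set (nat * int * int) :=
  [set e | exists i k, joins e.1.1 i k /\ e.1.2 = Num.min i k /\ e.2 = Num.max i k].

Definition edges_at0 : set (nat * int * int) :=
  [set e | edges e /\ (e.1.2 = 0 \/ e.2 = 0)].

Definition total_length {R : realType} : \bar R :=
  \esum_(e in edges_at0) (`|e.2 - e.1.2|%N%:R : R)%:E.

End CT.

(* Main.v *)
Require Import Defs.
From HB Require Import structures.
From mathcomp Require Import all_boot all_order all_algebra.
From mathcomp Require Import all_classical all_reals all_analysis.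
From mathcomp Require Import zify measurable_realfun.
Import Order.TTheory GRing.Theory Num.Theory.
Local Open Scope classical_set_scope.
Local Open Scope ring_scope.

Lemma cnt_right_recr (d : int -> nat) j (i : int) n :
  cnt_right d j i n.+1 = (cnt_right d j i n + (j <= d (i + n.+1%:Z)%R))%N.
Proof. by rewrite /cnt_right big_nat_recr. Qed.

Lemma cnt_right_recl (d : int -> nat) j (i : int) n :
  cnt_right d j i n.+1 = ((j <= d (i + 1)%R) + cnt_right d j (i + 1) n)%N.
Proof.
rewrite /cnt_right big_nat_recl //; congr (_ + _)%N.
apply: eq_bigr => t _; congr (_ <= d _)%N; rewrite -addrA; congr (_ + _).
Qed.

Lemma cnt_left_recr (d : int -> nat) j (i : int) n :
  cnt_left d j i n.+1 = (cnt_left d j i n + (j <= d (i - n.+1%:Z)%R))%N.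
Proof. by rewrite /cnt_left big_nat_recr. Qed.

Lemma cnt_right_left (d : int -> nat) j (i : int) n :
  (cnt_right d j (i - n%:Z) n + (j <= d (i - n%:Z)%R) =
   cnt_left d j i n + (j <= d i))%N.
Proof.
elim: n => [|n IH]; first by rewrite /cnt_right /cnt_left !big_geq // subr0.
rewrite cnt_right_recl cnt_left_recr.
have -> : i - n.+1%:Z + 1 = i - n%:Z.
  by rewrite -addn1 PoszD opprD addrA subrK.
move: IH; set a := (j <= d (i - n%:Z)%R)%N; set b := (j <= d (i - n.+1%:Z)%R)%N.
set x := cnt_right _ _ _ _; set y := cnt_left _ _ _ _; set z := (j <= d i)%N. lia.
Qed.

Lemma cnt_right_mono (d : int -> nat) j (i : int) m n : (m <= n)%N ->
  (cnt_right d j i m <= cnt_right d j i n)%N.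
Proof.
move=> /subnK <-; elim: (n - m)%N => [|k IH] //=.
by rewrite addSn cnt_right_recr (leq_trans IH) // leq_addr.
Qed.

Lemma cnt_left_mono (d : int -> nat) j (i : int) m n : (m <= n)%N ->
  (cnt_left d j i m <= cnt_left d j i n)%N.
Proof.
move=> /subnK <-; elim: (n - m)%N => [|k IH] //=.
by rewrite addSn cnt_left_recr (leq_trans IH) // leq_addr.
Qed.

Definition RightE (d : int -> nat) (j n : nat) : Prop :=
  [/\ (1 <= j)%N, (j <= d 0)%N, (j <= d n%:Z)%N & cnt_right d j 0 n = (2 * j - 1)%N].
Definition LeftE (d : int -> nat) (j n : nat) : Prop :=
  [/\ (1 <= j)%N, (j <= d 0)%N, (j <= d (- n%:Z))%N & cnt_left d j 0 n = (2 * j - 1)%N].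

Lemma cnt_pos_r (d : int -> nat) j i n : (1 <= j)%N ->
  cnt_right d j i n = (2 * j - 1)%N -> (0 < n)%N.
Proof. by case: n => // j1; rewrite /cnt_right big_geq //; lia. Qed.
Lemma cnt_pos_l (d : int -> nat) j i n : (1 <= j)%N ->
  cnt_left d j i n = (2 * j - 1)%N -> (0 < n)%N.
Proof. by case: n => // j1; rewrite /cnt_left big_geq //; lia. Qed.

Lemma edge_at0_cases d c (e : nat * int * int) : edges_at0 d c e ->
  (exists n, e = (e.1.1, 0, n%:Z) /\ RightE d e.1.1 n) \/
  (exists n, e = (e.1.1, - n%:Z, 0) /\ LeftE d e.1.1 n).
Proof.
case: e => [[j a] b] /=.
move=> [[i [k [[j1 dij dkj H] [/= Hmin Hmax]]]] /= H0].
move: j1 dij dkj H => /= j1 dij dkj H.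
case: H => [[_ [n [kE cn]]]|[_ [n [kE cn]]]]; subst k.
- have n0 := cnt_pos_r _ _ _ _ j1 cn.
  have lt : i < i + n%:Z by rewrite ltrDl ltz_nat.
  rewrite Hmin Hmax (min_idPl (ltW lt)) (max_idPr (ltW lt)) in H0 *.
  case: H0 => [i0|in0].
  + subst i; left; exists n; rewrite add0r; split => //; split => //.
  + have iE : i = - n%:Z by apply/eqP; rewrite -(subr0 i) -in0 opprD addrA subrr add0r.
    subst i; right; exists n; rewrite in0 in dkj *; split => //; split => //.
    move: (cnt_right_left d j 0 n); rewrite sub0r cn dij dkj => /addIn.
    done.
- have n0 := cnt_pos_l _ _ _ _ j1 cn.
  have lt : i - n%:Z < i by rewrite ltrBlDr ltrDl ltz_nat.
  rewrite Hmin Hmax (min_idPr (ltW lt)) (max_idPl (ltW lt)) in H0 *.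
  case: H0 => [in0|i0].
  + have iE : i = n%:Z by apply/eqP; rewrite -subr_eq0 in0.
    subst i; left; exists n; rewrite in0 in dkj *; split => //; split => //.
    move: (cnt_right_left d j n%:Z n); rewrite in0 dij dkj cn => /addIn.
    done.
  + subst i; right; exists n; rewrite add0r; split => //; split => //.
    by rewrite add0r in dkj.
Qed.

Lemma RightE_prev d j n : RightE d j n -> forall m, (m < n)%N ->
  (cnt_right d j 0 m < 2 * j - 1)%N.
Proof.
case=> j1 d0 dn cn m mn.
have n0 : (0 < n)%N by case: n mn {dn cn}.
move: cn dn; rewrite -(prednK n0) cnt_right_recr add0r => cn dn.
rewrite dn in cn.
have h : (m <= n.-1)%N by rewrite -ltnS prednK.
have := @cnt_right_mono d j 0 m n.-1 h; simpl in cn; lia.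
Qed.

Lemma LeftE_prev d j n : LeftE d j n -> forall m, (m < n)%N ->
  (cnt_left d j 0 m < 2 * j - 1)%N.
Proof.
case=> j1 d0 dn cn m mn.
have n0 : (0 < n)%N by case: n mn {dn cn}.
move: cn dn; rewrite -(prednK n0) cnt_left_recr sub0r => cn dn.
rewrite dn in cn.
have h : (m <= n.-1)%N by rewrite -ltnS prednK.
have := @cnt_left_mono d j 0 m n.-1 h; simpl in cn; lia.
Qed.

Lemma RightE_uniq d j n n' : RightE d j n -> RightE d j n' -> n = n'.
Proof.
wlog : n n' / (n <= n')%N => [H|nn'] R1 R2.
  by case/orP: (leq_total n n') => h; [|symmetry]; apply: H.
case: (ltngtP n n') => // lt; last by move: nn'; rewrite leqNgt lt.
have := RightE_prev _ _ _ R2 _ lt; case: R1 => _ _ _ ->; lia.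
Qed.

Lemma LeftE_uniq d j n n' : LeftE d j n -> LeftE d j n' -> n = n'.
Proof.
wlog : n n' / (n <= n')%N => [H|nn'] R1 R2.
  by case/orP: (leq_total n n') => h; [|symmetry]; apply: H.
case: (ltngtP n n') => // lt; last by move: nn'; rewrite leqNgt lt.
have := LeftE_prev _ _ _ R2 _ lt; case: R1 => _ _ _ ->; lia.
Qed.

Lemma esum_subset (R : realType) (T : choiceType) (A B : set T) (f : T -> \bar R) :
  A `<=` B -> (forall x, B x -> (0 <= f x)%E) ->
  (\esum_(x in A) f x <= \esum_(x in B) f x)%E.
Proof.
move=> AB f0; rewrite esum_mkcond [leRHS]esum_mkcond; apply: le_esum => x _.
case: ifPn => xA; first by rewrite ifT //; apply/mem_set/AB/set_mem.
by case: ifPn => // xB; apply/f0/set_mem.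
Qed.

Lemma esum_le_union (R : realType) (T : choiceType) (A B C : set T) (f : T -> \bar R) :
  A `<=` B `|` C -> (forall x, (0 <= f x)%E) ->
  (\esum_(x in A) f x <= \esum_(x in B) f x + \esum_(x in C) f x)%E.
Proof.
move=> ABC f0; rewrite (esumID B A); last by move=> *; exact: f0.
apply: leeD; apply: esum_subset => // x [Ax nBx].
by case: (ABC x Ax).
Qed.

Definition ARb (d : int -> nat) (j m : nat) : bool :=
  (j <= d 0)%N && (cnt_right d j 0 m < 2 * j - 1)%N.
Definition ALb (d : int -> nat) (j m : nat) : bool :=
  (j <= d 0)%N && (cnt_left d j 0 m < 2 * j - 1)%N.

Definition SR (R : realType) (d : int -> nat) : \bar R :=
  (\sum_(j <oo) \sum_(m <oo) ((ARb d j m)%:R)%:E)%E.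
Definition SL (R : realType) (d : int -> nat) : \bar R :=
  (\sum_(j <oo) \sum_(m <oo) ((ALb d j m)%:R)%:E)%E.

Lemma ones_le (R : realType) (b : nat -> bool) n :
  (forall m, (m < n)%N -> b m) ->
  ((n%:R : R)%:E <= \sum_(m <oo) ((b m)%:R)%:E)%E.
Proof.
move=> bn; apply: le_trans (nneseries_lim_ge n _); last by move=> *; rewrite lee_fin.
rewrite (eq_big_nat _ _ (F2 := fun=> 1%:E)); last by move=> i /andP[_ /bn ->].
by rewrite sumEFin sumr_const_nat subn0.
Qed.

Definition len (R : realType) (e : nat * int * int) : \bar R :=
  ((`|e.2 - e.1.2|%N%:R : R)%:E).

Definition ERs (d : int -> nat) : set (nat * int * int) :=
  [set e | exists n, e = (e.1.1, 0, n%:Z) /\ RightE d e.1.1 n].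
Definition ELs (d : int -> nat) : set (nat * int * int) :=
  [set e | exists n, e = (e.1.1, - n%:Z, 0) /\ LeftE d e.1.1 n].

Lemma esum_right (R : realType) d :
  (\esum_(e in ERs d) len R e <= SR R d)%E.
Proof.
pose rp j := xget 0%N [set n | RightE d j n].
pose JR := [set j | exists n, RightE d j n].
have -> : ERs d = (fun j => (j, 0, (rp j)%:Z)) @` JR.
  apply/seteqP; split => [e [n [eE Rn]]|e [j [n Rn] <-]].
  - exists e.1.1; first by exists n.
    rewrite eE /=; congr (_, _, _); congr Posz.
    have := @xgetI _ 0%N [set n | RightE d e.1.1 n] n Rn.
    by rewrite -/(rp e.1.1) => /RightE_uniq /(_ Rn).
  - exists (rp j); split => //.
    exact: (@xgetI _ 0%N [set n | RightE d j n] n Rn).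
rewrite esum_image; last by move=> x y _ _ [].
rewrite /SR nneseries_esumT; last by move=> *; apply: nneseries_ge0 => *; rewrite lee_fin ler0n //.
apply: (@le_trans _ _ (\esum_(j in JR) (\sum_(m <oo) ((ARb d j m)%:R)%:E))%E); last first.
  apply: esum_subset => // *; apply: nneseries_ge0 => *; rewrite lee_fin ler0n //.
apply: le_esum => j [n Rn].
have Rr : RightE d j (rp j) := @xgetI _ 0%N [set n | RightE d j n] n Rn.
rewrite /len /= addn0; apply: ones_le => m mr.
by case: (Rr) => _ d0 _ _; rewrite /ARb d0 (RightE_prev _ _ _ Rr).
Qed.

Lemma esum_left (R : realType) d :
  (\esum_(e in ELs d) len R e <= SL R d)%E.
Proof.
pose rp j := xget 0%N [set n | LeftE d j n].
pose JR := [set j | exists n, LeftE d j n].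
have -> : ELs d = (fun j => (j, - (rp j)%:Z, 0)) @` JR.
  apply/seteqP; split => [e [n [eE Rn]]|e [j [n Rn] <-]].
  - exists e.1.1; first by exists n.
    rewrite eE /=; congr (_, _, _); congr (- Posz _).
    have := @xgetI _ 0%N [set n | LeftE d e.1.1 n] n Rn.
    by rewrite -/(rp e.1.1) => /LeftE_uniq /(_ Rn).
  - exists (rp j); split => //.
    exact: (@xgetI _ 0%N [set n | LeftE d j n] n Rn).
rewrite esum_image; last by move=> x y _ _ [].
rewrite /SL nneseries_esumT; last by move=> *; apply: nneseries_ge0 => *; rewrite lee_fin ler0n //.
apply: (@le_trans _ _ (\esum_(j in JR) (\sum_(m <oo) ((ALb d j m)%:R)%:E))%E); last first.
  apply: esum_subset => // *; apply: nneseries_ge0 => *; rewrite lee_fin ler0n //.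
apply: le_esum => j [n Rn].
have Rr : LeftE d j (rp j) := @xgetI _ 0%N [set n | LeftE d j n] n Rn.
rewrite /len /= sub0r opprK absz_nat; apply: ones_le => m mr.
by case: (Rr) => _ d0 _ _; rewrite /ALb d0 (LeftE_prev _ _ _ Rr).
Qed.

Lemma total_le (R : realType) d c :
  (total_length (R := R) d c <= SR R d + SL R d)%E.
Proof.
apply: le_trans (leeD (esum_right R d) (esum_left R d)).
rewrite /total_length; apply: esum_le_union; last by move=> *; rewrite lee_fin.
move=> e /edge_at0_cases [[n [eE Rn]]|[n [eE Rn]]]; [left|right]; by exists n.
Qed.

Definition Fset (T : Type) (D : int -> T -> nat) n (s : 'I_n -> int)
  (Q : set ('I_n -> nat)) (N : nat) : set T :=
  [set w | exists v : {ffun 'I_n -> nat},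
     pickle_inv N = Some v /\ Q (fun t => v t) /\ forall t, D (s t) w = v t].

Arguments Fset {T} D {n} s Q N.

Lemma Fset_cases (T : Type) (D : int -> T -> nat) n
  (Q : set ('I_n -> nat)) (N : nat) :
  (forall s, Fset D s Q N = set0) \/
  exists v : {ffun 'I_n -> nat},
    forall s', Fset D s' Q N = [set w | forall t, D (s' t) w = v t].
Proof.
case E: (@pickle_inv {ffun 'I_n -> nat} N) => [v|]; last first.
  by left => s; apply/seteqP; split => // w [v [+ _]]; rewrite E.
have [q|nq] := pselect (Q (fun t => v t)); last first.
  left => s; apply/seteqP; split => // w [v' [Ev' [qv _]]].
  by move: Ev'; rewrite E => -[vv]; subst v'; exact: nq.
right; exists v => s'; apply/seteqP; split => w.
  by move=> [v' [Ev' [_ h]]]; move: Ev'; rewrite E => -[vv]; subst v'.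
by move=> h; exists v.
Qed.

Lemma Fset_triv (T : Type) (D : int -> T -> nat) n (s : 'I_n -> int)
  (Q : set ('I_n -> nat)) : trivIset setT (Fset D s Q).
Proof.
move=> N N' _ _ [w [[v [Ev [_ hv]]] [v' [Ev' [_ hv']]]]].
have vv : v = v' by apply/ffunP => t; rewrite -hv -hv'.
have h1 := @pickle_invK {ffun 'I_n -> nat} N; have h2 := @pickle_invK {ffun 'I_n -> nat} N'.
by rewrite Ev /= in h1; rewrite Ev' /= -vv in h2; rewrite -h1 -h2.
Qed.

Lemma Fset_cup (T : Type) (D : int -> T -> nat) n (s : 'I_n -> int)
  (Q : set ('I_n -> nat)) :
  [set w | Q (fun t => D (s t) w)] = \bigcup_(N in setT) Fset D s Q N.
Proof.
apply/seteqP; split => w.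
  move=> q; exists (pickle [ffun t => D (s t) w]) => //.
  exists [ffun t => D (s t) w]; rewrite pickleK_inv; split => //; split.
    by rewrite (_ : (fun t => _) = (fun t => D (s t) w)) //; apply: funext => t; rewrite ffunE.
  by move=> t; rewrite ffunE.
move=> [N _ [v [_ [q h]]]] /=.
by rewrite (_ : (fun t => D (s t) w) = (fun t => v t)) //; apply: funext => t; rewrite h.
Qed.

Arguments Fset_cup {T} D {n} s Q.
Arguments Fset_cases {T} D {n} Q N.
Arguments Fset_triv {T} D {n} s Q.

Lemma cyl_meas (R : realType) (d0 : measure_display) (Omega : measurableType d0)
  (D : int -> Omega -> nat) :
  (forall (i : int) (k : nat), measurable [set w | D i w = k]) ->
  forall n (s : 'I_n -> int) (v : 'I_n -> nat),
  measurable [set w | forall t, D (s t) w = v t].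
Proof.
move=> mD n s v.
rewrite (_ : [set w | _] = \bigcap_(t in setT) [set w | D (s t) w = v t]).
  by apply: fin_bigcap_measurable; [exact: finite_finset| move=> *; apply: mD].
by apply/seteqP; split => w /= h t; [move=> _|]; apply: h.
Qed.

Lemma ev_meas (R : realType) (d0 : measure_display) (Omega : measurableType d0)
  (D : int -> Omega -> nat) :
  (forall (i : int) (k : nat), measurable [set w | D i w = k]) ->
  forall n (s : 'I_n -> int) (Q : set ('I_n -> nat)),
  measurable [set w | Q (fun t => D (s t) w)].
Proof.
move=> mD n s Q; rewrite (Fset_cup D s Q); apply: bigcup_measurable => N _.
case: (Fset_cases D Q N) => [E0|[v Ev]]; first by rewrite E0.
rewrite Ev.
exact: (cyl_meas R).
Qed.

Lemma ev_shift (R : realType) (d0 : measure_display) (Omega : measurableType d0)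
  (P : probability Omega R) (D : int -> Omega -> nat) :
  (forall (i : int) (k : nat), measurable [set w | D i w = k]) ->
  (forall (n : nat) (s : 'I_n -> int) (v : 'I_n -> nat) (k : int),
     P [set w | forall t, D (s t + k) w = v t] = P [set w | forall t, D (s t) w = v t]) ->
  forall n (s : 'I_n -> int) (k : int) (Q : set ('I_n -> nat)),
  P [set w | Q (fun t => D (s t + k) w)] = P [set w | Q (fun t => D (s t) w)].
Proof.
move=> mD st n s k Q.
rewrite (Fset_cup D (fun t => s t + k) Q) (Fset_cup D s Q).
have mF s' N : measurable (Fset D s' Q N).
  case: (Fset_cases D Q N) => [E0|[v Ev]]; first by rewrite E0.
  rewrite Ev; exact: (cyl_meas R).
rewrite !measure_bigcup //; try by move=> *; apply: Fset_triv.
apply: eq_eseriesr => N _.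
case: (Fset_cases D Q N) => [E0|[v Ev]]; first by rewrite !E0.
by rewrite !Ev; apply: st.
  exact: Fset_triv.
exact: Fset_triv.
Qed.

Definition BRb (d : int -> nat) (j m : nat) : bool :=
  (j <= d (- m%:Z))%N && (cnt_right d j (- m%:Z) m < 2 * j - 1)%N.

Lemma BR_partial d j N :
  (\sum_(m < N) BRb d j m <= minn (cnt_right d j (- N%:Z) N) (2 * j - 1))%N.
Proof.
elim: N => [|N IH]; first by rewrite big_ord0.
rewrite big_ord_recr /= cnt_right_recl.
have -> : - N.+1%:Z + 1 = - N%:Z by rewrite -addn1 PoszD opprD addrNK.
move: IH; rewrite /BRb.
case: (j <= d (- N%:Z))%N;
  have [lt|ge] := ltnP (cnt_right d j (- N%:Z) N) (2 * j - 1);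
  rewrite /= ?add0n ?addn0 ?add1n; lia.
Qed.

Lemma BR_series (R : realType) d j :
  (\sum_(m <oo) ((BRb d j m)%:R : R)%:E <= ((2 * j - 1)%N%:R : R)%:E)%E.
Proof.
apply: lime_le; first by apply: is_cvg_nneseries => *; rewrite lee_fin ler0n.
apply: nearW => N.
rewrite big_mkord sumEFin -natr_sum lee_fin ler_nat.
exact: leq_trans (BR_partial d j N) (geq_minr _ _).
Qed.

Definition Qb (j m : nat) (f : 'I_m.+1 -> nat) : bool :=
  (j <= f ord0)%N && (\sum_(1 <= t < m.+1) (j <= f (inord t))%N < 2 * j - 1)%N.

Lemma ARb_Q d j m : ARb d j m = Qb j m (fun t : 'I_m.+1 => d (t : nat)%:Z).
Proof.
rewrite /ARb /Qb /cnt_right /=; congr (_ && (_ < _))%N.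
by apply: eq_big_nat => t /andP[_ tm]; rewrite inordK // add0r.
Qed.

Lemma BRb_Q d j m : BRb d j m = Qb j m (fun t : 'I_m.+1 => d ((t : nat)%:Z + - m%:Z)).
Proof.
rewrite /BRb /Qb /cnt_right /= add0r; congr (_ && (_ < _))%N.
by apply: eq_big_nat => t /andP[_ tm]; rewrite inordK // addrC.
Qed.

Lemma le_int_nm (R : realType) (d0 : measure_display) (T : measurableType d0)
  (mu : {measure set T -> \bar R}) (f g : T -> \bar R) :
  (forall x, (0 <= f x)%E) -> (forall x, (f x <= g x)%E) ->
  (\int[mu]_x f x <= \int[mu]_x g x)%E.
Proof.
move=> f0 fg; have g0 x : (0 <= g x)%E by exact: le_trans (f0 x) (fg x).
rewrite !ge0_integralTE //; apply: le_ereal_sup => _ [h hf <-].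
by exists h => // x; exact: le_trans (hf x) (fg x).
Qed.

Lemma ind_int (R : realType) (d0 : measure_display) (T : measurableType d0)
  (mu : {measure set T -> \bar R}) (b : T -> bool) :
  measurable [set w | b w] ->
  (\int[mu]_w ((b w)%:R : R)%:E = mu [set w | b w])%E.
Proof.
move=> mb; rewrite (eq_integral (fun w => (\1_[set w | b w] w : R)%:E)).
  by rewrite integral_indic // setIT.
move=> w _; rewrite indicE; case: (boolP (b w)) => h.
  by rewrite mem_set.
by rewrite memNset //; apply/negP.
Qed.

Lemma right_bound (R : realType) (d0 : measure_display)
  (Omega : measurableType d0) (P : probability Omega R)
  (D : int -> Omega -> nat) :
  (forall (i : int) (k : nat), measurable [set w | D i w = k]) ->
  (forall (n : nat) (s : 'I_n -> int) (v : 'I_n -> nat) (k : int),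
     P [set w | forall t, D (s t + k) w = v t] = P [set w | forall t, D (s t) w = v t]) ->
  forall j,
  (\sum_(m <oo) P [set w | ARb (fun i => D i w) j m] <= ((2 * j - 1)%N%:R : R)%:E)%E.
Proof.
move=> mD st j.
have e1 m : [set w | ARb (fun i => D i w) j m] =
    [set w | Qb j m (fun t : 'I_m.+1 => D ((t : nat)%:Z) w)].
  by apply/seteqP; split => w /=; rewrite ARb_Q.
have e2 m : [set w | BRb (fun i => D i w) j m] =
    [set w | Qb j m (fun t : 'I_m.+1 => D ((t : nat)%:Z + - m%:Z) w)].
  by apply/seteqP; split => w /=; rewrite BRb_Q.
have mB m : measurable [set w | BRb (fun i => D i w) j m].
  rewrite e2; exact: (ev_meas R _ _ D mD _ (fun t : 'I_m.+1 => (t : nat)%:Z + - m%:Z)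
                        (fun f => Qb j m f)).
have eqAB m : P [set w | ARb (fun i => D i w) j m] =
    (\int[P]_w ((BRb (fun i => D i w) j m)%:R : R)%:E)%E.
  rewrite ind_int // e1 e2; symmetry.
  exact: (ev_shift R _ _ P D mD st _ (fun t : 'I_m.+1 => (t : nat)%:Z) (- m%:Z)
            (fun f => Qb j m f)).
rewrite (eq_eseriesr (fun m _ => eqAB m)) -integral_nneseries //; last first.
- move=> m; apply/measurable_EFinP.
  rewrite (_ : (fun x => _) = \1_[set w | BRb (fun i => D i w) j m]).
    exact: measurable_indic.
  apply: funext => w; rewrite indicE; case: (boolP (BRb _ j m)) => h.
    by rewrite mem_set.
  by rewrite memNset //; apply/negP.
apply: (le_trans (le_int_nm _ _ _ P _ (cst ((2 * j - 1)%N%:R : R)%:E) _ _)).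

- by move=> w; apply: nneseries_ge0 => *; rewrite lee_fin ler0n.
- by move=> w; exact: BR_series.
by rewrite integral_cst //= probability_setT mule1.
Qed.

Lemma mfun_ind (R : realType) (d0 : measure_display) (T : measurableType d0)
  (b : T -> bool) : measurable [set w | b w] ->
  measurable_fun setT (fun w => ((b w)%:R : R)%:E).
Proof.
move=> mb; apply/measurable_EFinP.
rewrite (_ : (fun x => _) = \1_[set w | b w]).
  exact: measurable_indic.
apply: funext => w; rewrite indicE; case: (boolP (b w)) => h.
  by rewrite mem_set.
by rewrite memNset //; apply/negP.
Qed.

Lemma int_series_ind (R : realType) (d0 : measure_display) (T : measurableType d0)
  (mu : {measure set T -> \bar R}) (b : nat -> T -> bool) :
  (forall m, measurable [set w | b m w]) ->
  (\int[mu]_w \sum_(m <oo) ((b m w)%:R : R)%:E = \sum_(m <oo) mu [set w | b m w])%E.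
Proof.
move=> mb; rewrite integral_nneseries //.
- by apply: eq_eseriesr => m _; rewrite ind_int.
- by move=> m; apply: mfun_ind.
Qed.

Lemma int_SR (R : realType) (d0 : measure_display)
  (Omega : measurableType d0) (P : probability Omega R)
  (D : int -> Omega -> nat) :
  (forall (i : int) (k : nat), measurable [set w | D i w = k]) ->
  (forall (n : nat) (s : 'I_n -> int) (v : 'I_n -> nat) (k : int),
     P [set w | forall t, D (s t + k) w = v t] = P [set w | forall t, D (s t) w = v t]) ->
  forall M : nat,
  (forall j, (M < j)%N -> P [set w | (j <= D 0 w)%N] = 0) ->
  (\int[P]_w SR R (fun i => D i w) < +oo)%E.
Proof.
move=> mD st M hz.
have mA j m : measurable [set w | ARb (fun i => D i w) j m].
  rewrite (_ : [set w | _] = [set w | Qb j m (fun t : 'I_m.+1 => D ((t : nat)%:Z) w)]).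
    exact: (ev_meas R _ _ D mD _ (fun t : 'I_m.+1 => (t : nat)%:Z) (fun f => Qb j m f)).
  by apply/seteqP; split => w /=; rewrite ARb_Q.
have h1 : forall j m (w : Omega), setT w -> predT m ->
    (0 <= ((ARb (fun i => D i w) j m)%:R : R)%:E)%E.
  by move=> *; rewrite lee_fin ler0n.
have h2 : forall j m, predT m -> measurable_fun setT
    (fun w => ((ARb (fun i => D i w) j m)%:R : R)%:E).
  by move=> j m _; apply: mfun_ind.
rewrite /SR integral_nneseries //; last first.
- by move=> j x _; apply: nneseries_ge0 => *; rewrite lee_fin ler0n.
- move=> j; have H := (@ge0_emeasurable_sum _ _ _ setT _ predT (h1 j) (h2 j)).
  exact H.
rewrite (eq_eseriesr (fun j _ => int_series_ind _ _ _ P _ (mA j))).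
pose c j := (((if (j <= M)%N then (2 * j - 1)%N%:R else 0) : R)%:E).
apply: (@le_lt_trans _ _ (\sum_(j <oo) c j)%E).
  apply: lee_nneseries => [i _ _|j _].
    by apply: nneseries_ge0 => *.
  rewrite /c; case: ifPn => jM; first exact: right_bound.
  rewrite eseries0 // => m _ _.
  apply/eqP; rewrite eq_le measure_ge0 andbT -(hz j); last by rewrite ltnNge.
  apply: le_measure; first exact/mem_set/mA.
    apply/mem_set.
    rewrite (_ : [set w | _] = [set w | (fun f : 'I_1 -> nat => (j <= f ord0)%N)
                                         (fun t => D ((fun _ : 'I_1 => 0) t) w)]) //.
    exact: (ev_meas R _ _ D mD 1 (fun _ => 0) (fun f : 'I_1 -> nat => (j <= f ord0)%N)).
  by move=> w /andP[].
rewrite (nneseries_split 0 M.+1); last by move=> k _; rewrite /c; case: ifP; rewrite lee_fin ?ler0n.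
rewrite eseries0 ?adde0; last by move=> k; rewrite /c add0n => /= kM _; rewrite ifN // -ltnNge.
by rewrite /c sumEFin ltry.
Qed.

Lemma mSR (R : realType) (d0 : measure_display)
  (Omega : measurableType d0) (D : int -> Omega -> nat) :
  (forall (i : int) (k : nat), measurable [set w | D i w = k]) ->
  measurable_fun setT (fun w => SR R (fun i => D i w)).
Proof.
move=> mD.
have mA j m : measurable [set w | ARb (fun i => D i w) j m].
  rewrite (_ : [set w | _] = [set w | Qb j m (fun t : 'I_m.+1 => D ((t : nat)%:Z) w)]).
    exact: (ev_meas R _ _ D mD _ (fun t : 'I_m.+1 => (t : nat)%:Z) (fun f => Qb j m f)).
  by apply/seteqP; split => w /=; rewrite ARb_Q.
have h1 : forall j m (w : Omega), setT w -> predT m ->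
    (0 <= ((ARb (fun i => D i w) j m)%:R : R)%:E)%E.
  by move=> *; rewrite lee_fin ler0n.
have h2 : forall j m, predT m -> measurable_fun setT
    (fun w => ((ARb (fun i => D i w) j m)%:R : R)%:E).
  by move=> j m _; apply: mfun_ind.
have h3 : forall j (w : Omega), setT w -> predT j ->
    (0 <= \sum_(m <oo) ((ARb (fun i => D i w) j m)%:R : R)%:E)%E.
  by move=> *; apply: nneseries_ge0 => *; rewrite lee_fin ler0n.
have h4 : forall j, predT j -> measurable_fun setT
    (fun w => \sum_(m <oo) ((ARb (fun i => D i w) j m)%:R : R)%:E)%E.
  move=> j _; have H := (@ge0_emeasurable_sum _ _ _ setT _ predT (h1 j) (h2 j)).
  exact H.
have H := (@ge0_emeasurable_sum _ _ _ setT _ predT h3 h4).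
exact H.
Qed.

Lemma SL_SR (R : realType) d : SL R d = SR R (fun i => d (- i)).
Proof.
rewrite /SL /SR; apply: eq_eseriesr => j _; apply: eq_eseriesr => m _.
rewrite /ALb /ARb /cnt_left /cnt_right oppr0.
have -> : (\sum_(1 <= t < m.+1) (j <= d (0 - t%:Z)%R))%N =
          (\sum_(1 <= t < m.+1) (j <= d (- (0 + t%:Z))%R))%N.
  by apply: eq_bigr => t _; rewrite sub0r add0r.
by [].
Qed.

Theorem proposition2p3 (R : realType) (d0 : measure_display)
  (Omega : measurableType d0) (P : probability Omega R)
  (D : int -> Omega -> nat) (C : nat -> Omega -> bool) (G : nat -> R) :
  (* measurability *)
  (forall (i : int) (k : nat), measurable [set w | D i w = k]) ->
  (forall j : nat, measurable [set w | C j w = true]) ->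
  (* stationarity: finite-dimensional laws invariant under index shifts *)
  (forall (n : nat) (s : 'I_n -> int) (v : 'I_n -> nat) (k : int),
     P [set w | forall t, D (s t + k) w = v t] = P [set w | forall t, D (s t) w = v t]) ->
  (* D'_i ~ G *)
  (forall (i : int) (k : nat), P [set w | D i w = k] = (G k)%:E) ->
  (* fair coins, independent across levels and independent of the degrees *)
  (forall (n : nat) (s : 'I_n -> int) (v : 'I_n -> nat) (J : seq nat) (b : nat -> bool),
     uniq J ->
     P [set w | (forall t, D (s t) w = v t) /\ (forall j, j \in J -> C j w = b j)]
     = (P [set w | forall t, D (s t) w = v t] * ((2 : R)^-1 ^+ size J)%:E)%E) ->
  (* G has bounded support *)
  (exists M : nat, forall k : nat, (M < k)%N -> G k = 0) ->
  (\int[P]_w total_length (fun i => D i w) (fun j => C j w) < +oo)%E.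
Proof.
move=> mD _ st hG _ [M hM].
have hz j : (M < j)%N -> P [set w | (j <= D 0 w)%N] = 0.
  move=> Mj.
  rewrite (_ : [set w | _] = \bigcup_(k in [set k | (j <= k)%N]) [set w | D 0 w = k]); last first.
    apply/seteqP; split => [w jD|w [k /= jk wk]]; first by exists (D 0 w).
    by rewrite /= wk.
  rewrite measure_bigcup //; last by move=> k k' _ _ [w [/= <- <-]].
  rewrite eseries0 // => k _; rewrite inE => jk.
  have := hG 0 k; rewrite hM ?(leq_trans Mj jk) // => <-; congr (P _).
pose D' i w := D (- i) w.
have mD' : forall (i : int) (k : nat), measurable [set w | D' i w = k].
  by move=> i k; exact: mD.
have st' : forall (n : nat) (s : 'I_n -> int) (v : 'I_n -> nat) (k : int),
    P [set w | forall t, D' (s t + k) w = v t] = P [set w | forall t, D' (s t) w = v t].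
  move=> n s v k.
  transitivity (P [set w | forall t, D ((fun t => - s t) t + - k) w = v t]).
    by congr (P _); apply/seteqP; split => w /= h t; move: (h t); rewrite /D' opprD.
  by rewrite st.
have hz' j : (M < j)%N -> P [set w | (j <= D' 0 w)%N] = 0.
  by move=> Mj; rewrite /D' oppr0; exact: hz.
apply: (le_lt_trans (le_int_nm _ _ _ P _
   (fun w => SR R (fun i => D i w) + SR R (fun i => D' i w))%E _ _)).
- by move=> w; apply: esum_ge0 => *; rewrite lee_fin ler0n.
- by move=> w; have := total_le R (fun i => D i w) (fun j => C j w); rewrite SL_SR.
rewrite ge0_integralD //; first last.
- exact: mSR.
- by move=> w _; apply: nneseries_ge0 => *; apply: nneseries_ge0 => *; rewrite lee_fin ler0n.
- exact: mSR.
- by move=> w _; apply: nneseries_ge0 => *; apply: nneseries_ge0 => *; rewrite lee_fin ler0n.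
apply: lte_add_pinfty.
  exact: (int_SR R _ _ P D mD st M hz).
exact: (int_SR R _ _ P D' mD' st' M hz').
Qed.
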